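(* Let $n\in\mathbb N$ be even. On $\pm[n]:=\{-n,\ldots,-1,1,\ldots,n\}$ let $$\tau_0=(1,-1)(2,-2)\cdots(n,-n),\qquad \tau_2=(-1,2)(-2,3)\cdots(-(n-1),n)(-n,1),$$ and let $\widetilde{1}_n=(1,2,\ldots,n)(-n,-n+1,\ldots,-1)$. Let $b_1(n)$ be the set of fixed-point-free involutions $\tau_1$ of $\pm[n]$ such that $\#(\tau_2\tau_1)=n$, $\tau_0\tau_1=\tau_1\tau_0$, $\tau_0\tau_1$ is fixed-point free, and there exists $a\in[n]$ with $\tau_1(a)\in[n]$. Let $\mathrm{NC}_2^\delta(n,-n)$ be the set of fixed-point-free involutions $\pi$ of $\pm[n]$ such that: (i) the group $\langle \pi,\widetilde 1_n\rangle$ acts transitively on $\pm[n]$; (ii) $\#(\pi)+\#(\pi^{-1}\widetilde{1}_n)+\#(\widetilde 1_n)=2n+2$; (iii) for no $r\in[n]$ is $(-r,r)$ a cycle of $\pi$; (iv) whenever $(r,s)$ is a cycle of $\pi$, so is $(-s,-r)$. Then the map $\varphi_1:b_1(n)\to\mathrm{NC}_2^\delta(n,-n)$, $\tau_1\mapsto\tau_1\tau_0$, is well defined and is a bijection.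
   Context: Permutations are composed right to left, i.e. $(\sigma\rho)(x)=\sigma(\rho(x))$. For a permutation $\sigma$, $\#(\sigma)$ denotes its number of cycles, with fixed points counted as cycles. $[n]=\{1,\ldots,n\}$. The set $b_1(n)$ is a combinatorial encoding of the non-orientable ribbon graphs of Euler genus $1$ built from one $n$-gon, and $\mathrm{NC}_2^\delta(n,-n)$ is the set of symmetric non-crossing annular pairings of $\pm[n]$. *)

(* Defs.v *)
From HB Require Import structures.
From mathcomp Require Import all_boot all_order all_algebra all_fingroup.
Set Implicit Arguments. Unset Strict Implicit. Unset Printing Implicit Defensive.

(* The set  +-[n] = {-n,...,-1,1,...,n}  is encoded as  'I_n * bool :
   (i, false) stands for the integer  i+1   (i.e. an element of [n]),
   (i, true)  stands for the integer -(i+1). *)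
Definition pm (n : nat) := ('I_n * bool)%type.

Definition ival n (x : pm n) : int :=
  if x.2 then (- Posz x.1.+1)%R else Posz x.1.+1.

Definition is_pos n (x : pm n) : bool := ~~ x.2.

(* Paper's composition convention: (s o r)(x) = s (r x).
   MathComp's product (r * s) applies r first, then s. *)
Definition pcomp T (s r : {perm T}) : {perm T} := (r * s)%g.

(* #(s): number of cycles, fixed points counted. *)
Definition ncycles T (s : {perm T}) : nat := #|porbits s|.

Definition fpf_invol T (s : {perm T}) : Prop :=
  forall x, s (s x) = x /\ s x != x.

Definition tau0_fun n (x : pm n) : pm n := (x.1, ~~ x.2).
Lemma tau0_inj n : injective (@tau0_fun n).
Proof. apply: (can_inj (g := @tau0_fun n)) => -[i b] /=; by rewrite /tau0_fun negbK. Qed.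
Definition tau0 n : {perm pm n} := perm (@tau0_inj n).

(* tau2 = (-1,2)(-2,3)...(-(n-1),n)(-n,1) : -(i+1) <-> i+2 (cyclically) *)
Definition tau2_fun n (x : pm n) : pm n :=
  if x.2 then (ordS x.1, false) else (ord_pred x.1, true).
Lemma tau2_inj n : injective (@tau2_fun n).
Proof.
apply: (can_inj (g := @tau2_fun n)) => -[i [|]];
  by rewrite /tau2_fun /= ?ordSK ?ord_predK.
Qed.
Definition tau2 n : {perm pm n} := perm (@tau2_inj n).

(* one_tilde = (1,2,...,n)(-n,-n+1,...,-1):
   k -> k+1 (mod n) on [n];  -k -> -(k-1) on negatives, with -1 -> -n. *)
Definition ot_fun n (x : pm n) : pm n :=
  if x.2 then (ord_pred x.1, true) else (ordS x.1, false).
Definition ot_inv n (x : pm n) : pm n :=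
  if x.2 then (ordS x.1, true) else (ord_pred x.1, false).
Lemma ot_inj n : injective (@ot_fun n).
Proof.
apply: (can_inj (g := @ot_inv n)) => -[i [|]];
  by rewrite /ot_fun /ot_inv /= ?ordSK ?ord_predK.
Qed.
Definition one_tilde n : {perm pm n} := perm (@ot_inj n).

Definition b1 n (t1 : {perm pm n}) : Prop :=
  [/\ fpf_invol t1,
      ncycles (pcomp (tau2 n) t1) = n,
      pcomp (tau0 n) t1 = pcomp t1 (tau0 n),
      (forall x, pcomp (tau0 n) t1 x != x) &
      exists a : pm n, is_pos a /\ is_pos (t1 a)].

Definition NC2delta n (p : {perm pm n}) : Prop :=
  [/\ fpf_invol p,
      (forall x y : pm n, exists2 g, g \in <<[set p; one_tilde n]>>%g & g x = y),
      ncycles p + ncycles (pcomp p^-1%g (one_tilde n)) + ncycles (one_tilde n)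
        = 2 * n + 2,
      (forall r : pm n, is_pos r -> p r != tau0 n r) &
      (forall r s : pm n, p r = s -> p (tau0 n s) = tau0 n r)].

Definition phi1 n (t1 : {perm pm n}) : {perm pm n} := pcomp t1 (tau0 n).

(* Main.v *)
Require Import Defs.
From mathcomp Require Import all_boot all_order all_algebra all_fingroup.
From mathcomp Require Import zify.
Require Import Defs.
Set Implicit Arguments. Unset Strict Implicit. Unset Printing Implicit Defensive.

Lemma iter_ordS_val n (i : 'I_n) k : val (iter k (@ordS n) i) = (i + k) %% n.
Proof.
elim: k => [|k IH]; first by rewrite addn0 modn_small.
by rewrite iterS /= IH addnS -addn1 modnDml addn1.
Qed.

Lemma reach_ordS n (i j : 'I_n) : exists k, iter k (@ordS n) i = j.
Proof.
exists (j + n - i); apply: val_inj; rewrite iter_ordS_val.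
rewrite subnKC; last by apply: leq_trans (ltnW (ltn_ord i)) (leq_addl _ _).
by rewrite modnDr modn_small.
Qed.

Lemma otE n (x : pm n) : one_tilde n x = ot_fun x.
Proof. by rewrite permE. Qed.

Lemma otX_pos n k (i : 'I_n) : ((one_tilde n) ^+ k)%g (i, false) = (iter k (@ordS n) i, false).
Proof.
elim: k => [|k IH]; first by rewrite expg0 perm1.
by rewrite expgSr permM IH otE.
Qed.

Lemma otX_neg n k (j : 'I_n) : ((one_tilde n) ^+ k)%g (iter k (@ordS n) j, true) = (j, true).
Proof.
elim: k => [|k IH]; first by rewrite expg0 perm1.
by rewrite expgS permM otE /ot_fun /= ordSK IH.
Qed.

Lemma ot_reach n (x y : pm n) : x.2 = y.2 -> exists k, ((one_tilde n) ^+ k)%g x = y.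
Proof.
case: x y => [i b] [j c] /= <-; case: b.
  have [k <-] := reach_ordS j i; exists k; exact: otX_neg.
have [k <-] := reach_ordS i j; exists k; exact: otX_pos.
Qed.

Lemma otX_sign n k (x : pm n) : (((one_tilde n) ^+ k)%g x).2 = x.2.
Proof.
elim: k => [|k IH]; first by rewrite expg0 perm1.
by rewrite expgSr permM otE /ot_fun; case: ifP => /= h; rewrite -IH h.
Qed.

Lemma porbit_ot n (x : pm n) : porbit (one_tilde n) x = [set y | y.2 == x.2].
Proof.
apply/setP => y; rewrite inE; apply/porbitP/eqP => [[k ->]|/esym/ot_reach [k <-]]; last by exists k.
by rewrite otX_sign.
Qed.

Lemma ncycles_ot n (i : 'I_n) : ncycles (one_tilde n) = 2.
Proof.
rewrite /ncycles /porbits.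
have -> : [set porbit (one_tilde n) x | x : pm n] = [set [set y : pm n | y.2 == false]; [set y : pm n | y.2 == true]].
  apply/setP => A; rewrite !inE; apply/imsetP/orP => [[x _ ->]|[] /eqP ->].
  - by rewrite porbit_ot; case: x.2; [right|left].
  - by exists (i, false); rewrite ?porbit_ot.
  - by exists (i, true); rewrite ?porbit_ot.
rewrite cards2; case: eqP => // /setP /(_ (i, false)); by rewrite !inE.
Qed.

Lemma porbit_invol T (s : {perm T}) x : (forall y, s (s y) = y) -> porbit s x = [set x; s x].
Proof.
move=> ss; apply/setP => y; rewrite !inE; apply/porbitP/orP => [[k ->]|[] /eqP ->].
- elim: k => [|k IH]; first by rewrite expg0 perm1 eqxx; left.
  rewrite expgSr permM; case: IH => /eqP ->; rewrite ?ss eqxx; [right|left] => //.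
- by exists 0; rewrite expg0 perm1.
- by exists 1; rewrite expg1.
Qed.

Lemma card_porbits_sum T (s : {perm T}) : #|T| = \sum_(A in porbits s) #|A|.
Proof.
rewrite -cardsT; apply: card_partition.
rewrite /porbits porbitE.
have := orbit_partition (to := perm_action T) (G := <[s]>%g) (S := [set: T]).
have -> : [set orbit 'P <[s]>%g x | x : T] = [set orbit 'P <[s]>%g x | x in [set: T]].
  by apply/setP => y; apply/imsetP/imsetP => [[x _ ->]|[x _ ->]]; exists x.
apply; by apply/actsP => g _ x; rewrite !inE.
Qed.

Lemma ncycles_fpf n (s : {perm pm n}) : fpf_invol s -> ncycles s = n.
Proof.
move=> H; have := card_porbits_sum s.
rewrite (eq_bigr (fun _ => 2)); last first.
  move=> A /imsetP [x _ ->]; rewrite porbit_invol; last by move=> y; case: (H y).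
  by rewrite cards2 eq_sym; case: (H x) => _ ->.
rewrite sum_nat_const card_prod card_ord card_bool /ncycles => /eqP.
by rewrite eqn_pmul2r // eq_sym => /eqP.
Qed.

Lemma ncycles_conj T (s h : {perm T}) : ncycles (s ^ h)%g = ncycles s.
Proof.
rewrite /ncycles /porbits.
have E : forall x, porbit (s ^ h)%g (h x) = h @: porbit s x.
  move=> x; apply/setP => y; apply/porbitP/imsetP => [[k ->]|[z /porbitP [k ->] ->]].
    exists ((s ^+ k)%g x); first exact: mem_porbit.
    by rewrite -conjXg permJ.
  by exists k; rewrite -conjXg permJ.
have -> : [set porbit (s ^ h)%g x | x : T] = (fun A : {set T} => h @: A) @: [set porbit s x | x : T].
  apply/setP => A; apply/imsetP/imsetP => [[x _ ->]|[B /imsetP [x _ ->] ->]].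
    exists (porbit s (h^-1 x)%g); first exact: imset_f.
    by rewrite -E permKV.
  by exists (h x) => //; rewrite E.
by rewrite card_imset //; apply: imset_inj; exact: perm_inj.
Qed.

Lemma tau0E n (x : pm n) : tau0 n x = (x.1, ~~ x.2).
Proof. by rewrite permE. Qed.
Lemma tau0K n (x : pm n) : tau0 n (tau0 n x) = x.
Proof. by rewrite !tau0E negbK; case: x. Qed.
Lemma tau2E n (x : pm n) : tau2 n x = tau2_fun x.
Proof. by rewrite permE. Qed.
Lemma ot_tau n (x : pm n) : one_tilde n x = tau2 n (tau0 n x).
Proof. by case: x => i [|]; rewrite otE tau2E tau0E. Qed.
Lemma inv_invol T (s : {perm T}) : (forall x, s (s x) = x) -> (s^-1)%g = s.
Proof. by move=> H; apply/permP => x; apply: (@perm_inj _ s); rewrite permKV H. Qed.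

Lemma key n (t1 : {perm pm n}) : (forall x, t1 (t1 x) = x) ->
  (forall x, tau0 n (t1 x) = t1 (tau0 n x)) ->
  ncycles (pcomp ((pcomp t1 (tau0 n))^-1)%g (one_tilde n)) = ncycles (pcomp (tau2 n) t1).
Proof.
move=> H1 H2; rewrite /pcomp.
have -> : (one_tilde n * (tau0 n * t1)^-1)%g = ((t1 * tau2 n) ^ (t1 * tau0 n))%g.
  apply/permP => x; rewrite /conjg !invMg !inv_invol //; last exact: tau0K.
  by rewrite !permM ot_tau H1 H2.
exact: ncycles_conj.
Qed.

Lemma gen_mem n (p : {perm pm n}) g : g \in [set p; one_tilde n] -> g \in <<[set p; one_tilde n]>>%g.
Proof. exact: mem_gen. Qed.

Lemma ncycles_le n (s : {perm pm n}) : ncycles s <= 2 * n.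
Proof.
by rewrite /ncycles /porbits (leq_trans (leq_imset_card _ _)) // card_prod card_ord card_bool mulnC.
Qed.

Lemma part1 n (t1 : {perm pm n}) : b1 t1 -> NC2delta (phi1 t1).
Proof.
case=> Hf Hn Hc H4 [a [Ha Hta]].
have H1 x : t1 (t1 x) = x by case: (Hf x).
have Hc' x : tau0 n (t1 x) = t1 (tau0 n x).
  by move: (congr1 (fun s : {perm pm n} => s x) Hc); rewrite /pcomp !permM.
have pE x : phi1 t1 x = t1 (tau0 n x) by rewrite /phi1 /pcomp permM.
have pp x : phi1 t1 (phi1 t1 x) = x by rewrite !pE -Hc' H1 tau0K.
have ot_in : one_tilde n \in <<[set phi1 t1; one_tilde n]>>%g by apply: gen_mem; rewrite !inE eqxx orbT.
have p_in : phi1 t1 \in <<[set phi1 t1; one_tilde n]>>%g by apply: gen_mem; rewrite !inE eqxx.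
split.
- move=> x; split; first exact: pp.
  by rewrite pE -Hc'; move: (H4 x); rewrite /pcomp permM.
- move=> x y; case: (boolP (x.2 == y.2)) => [/eqP /ot_reach [k <-]|Hxy].
    by exists ((one_tilde n)^+k)%g; rewrite ?groupX.
  have Hpa : phi1 t1 (tau0 n a) = t1 a by rewrite pE tau0K.
  have sa : (tau0 n a).2 = true by rewrite tau0E /=; move: Ha; rewrite /is_pos; case: a.2.
  have sb : (t1 a).2 = false by move: Hta; rewrite /is_pos; case: (t1 a).2.
  case Ex : x.2 Hxy; case Ey : y.2 => // _.
  + have [i Hi] := @ot_reach n x (tau0 n a) (etrans Ex (esym sa)).
    have [j Hj] := @ot_reach n (t1 a) y (etrans sb (esym Ey)).
    exists ((one_tilde n)^+i * phi1 t1 * (one_tilde n)^+j)%g.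
      by rewrite groupM ?groupX // groupM ?groupX.
    by rewrite permM (permM (one_tilde n ^+ i)%g) Hi Hpa Hj.
  + have [i Hi] := @ot_reach n x (t1 a) (etrans Ex (esym sb)).
    have [j Hj] := @ot_reach n (tau0 n a) y (etrans sa (esym Ey)).
    exists ((one_tilde n)^+i * phi1 t1 * (one_tilde n)^+j)%g.
      by rewrite groupM ?groupX // groupM ?groupX.
    by rewrite permM (permM (one_tilde n ^+ i)%g) Hi -Hpa pp Hj.
- rewrite ncycles_fpf; last by move=> x; split; [exact: pp| rewrite pE -Hc'; move: (H4 x); rewrite /pcomp permM].
  rewrite (ncycles_ot a.1) /phi1 key // Hn.
  by rewrite mul2n -addnn.
- by move=> r _; rewrite pE; case: (Hf (tau0 n r)).
- by move=> r s <-; rewrite !pE tau0K H1.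
Qed.

Lemma part3 n (p : {perm pm n}) : NC2delta p -> exists2 t1, b1 t1 & phi1 t1 = p.
Proof.
case=> Hf Htr Hcnt H4 H5.
have pp x : p (p x) = x by case: (Hf x).
have pt y : p (tau0 n y) = tau0 n (p y) by apply: H5; rewrite pp.
have n_gt0 : 0 < n.
  rewrite lt0n; apply/eqP => n0.
  have := ncycles_le p; have := ncycles_le (pcomp p^-1%g (one_tilde n)); have := ncycles_le (one_tilde n).
  have e : 2 * n = 0 by rewrite n0.
  rewrite e in Hcnt *; lia.
pose i0 : 'I_n := Ordinal n_gt0.
set t1 := (tau0 n * p)%g.
have tE x : t1 x = p (tau0 n x) by rewrite permM.
have Ephi : phi1 t1 = p.
  by apply/permP => x; rewrite /phi1 /pcomp !permM tau0K.
exists t1 => //.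
have H1 x : t1 (t1 x) = x by rewrite !tE pt pp tau0K.
have Hc' x : tau0 n (t1 x) = t1 (tau0 n x) by rewrite !tE pt !tau0K.
split.
- move=> x; split; first exact: H1.
  rewrite tE; case Ex : x.2.
    have := H4 (tau0 n x); rewrite tau0K /is_pos tau0E Ex => /(_ isT).
    by [].
  apply/eqP => E; have := H4 x; rewrite /is_pos Ex => /(_ isT); by rewrite -{1}E pp eqxx.
- rewrite -key //; move: Hcnt; rewrite -Ephi ncycles_fpf; last by rewrite Ephi.
  rewrite (ncycles_ot i0); rewrite /phi1; lia.
- by rewrite /pcomp; apply/permP => x; rewrite (permM t1) (permM (tau0 n) t1) Hc'.
- move=> x; rewrite /pcomp permM Hc' tE tau0K; case: (Hf x) => _ //.
- case: (boolP [exists a, is_pos a && is_pos (t1 a)]) => [/existsP [a /andP [Ha Hb]]|Hno].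
    by exists a.
  exfalso.
  have neg (y : pm n) : y.2 -> (p y).2.
    move=> Hy; apply: contraNT Hno => Hpy; apply/existsP; exists (tau0 n y).
    by rewrite /is_pos tE tau0K tau0E /= Hy Hpy.
  have pos (y : pm n) : ~~ y.2 -> ~~ (p y).2.
    by move=> Hy; apply: contraNN Hy => /neg; rewrite pp.
  pose S := [set y : pm n | ~~ y.2].
  have sub : <<[set p; one_tilde n]>>%g \subset 'N(S | 'P)%g.
    rewrite gen_subG; apply/subsetP => g; move=> /set2P [] ->.
      apply/astabsP => y; rewrite /= !inE; apply/idP/idP; first by apply: contraNN => /neg.
      exact: pos.
    apply/astabsP => y; rewrite /= !inE. by rewrite /aperm otE /ot_fun; case: y.2.
  have [g Hg Hgx] := Htr (i0, false) (i0, true).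
  have /astabsP HS := subsetP sub g Hg; have := HS (i0, false); rewrite /= /aperm Hgx !inE.
  by [].
Qed.

Theorem proposition5 (n : nat) : ~~ odd n ->
  (forall t1 : {perm pm n}, b1 t1 -> NC2delta (phi1 t1)) /\
  (forall t1 t1' : {perm pm n}, b1 t1 -> b1 t1' -> phi1 t1 = phi1 t1' -> t1 = t1') /\
  (forall p : {perm pm n}, NC2delta p -> exists2 t1, b1 t1 & phi1 t1 = p).
Proof.
move=> _; split; first exact: part1.
split; last exact: part3.
by move=> t1 t1' _ _; rewrite /phi1 /pcomp => /mulgI.
Qed.
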